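(* Let $m_1,m_2,m_3,m_4>0$, $M=\sum m_i$, $I(\mathbf{r})=\frac{1}{2M}\sum_{i<j}m_im_jr_{ij}^2$ and $P(\mathbf{r})=r_{12}r_{34}+r_{14}r_{23}-r_{13}r_{24}$ for $\mathbf{r}=(r_{12},r_{13},r_{14},r_{23},r_{24},r_{34})$. The set $\mathcal{M}^+=\{\mathbf{r}\in[0,\infty)^6: I(\mathbf{r})=1,\ P(\mathbf{r})=0\}$ is contractible, and its Euler characteristic is $\chi(\mathcal{M}^+)=1$. *)

(* Defs.v *)
From HB Require Import structures.
From mathcomp Require Import all_boot all_order all_algebra.
From mathcomp Require Import all_classical all_reals all_analysis.
Set Implicit Arguments. Unset Strict Implicit. Unset Printing Implicit Defensive.
Import Order.TTheory GRing.Theory Num.Theory.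
Import numFieldNormedType.Exports.
Local Open Scope classical_set_scope.
Local Open Scope ring_scope.

Section Coords.
Variable R : realType.
Implicit Type r : 'rV[R]_6.
Definition r12 r := r ord0 (@Ordinal 6 0 isT).
Definition r13 r := r ord0 (@Ordinal 6 1 isT).
Definition r14 r := r ord0 (@Ordinal 6 2 isT).
Definition r23 r := r ord0 (@Ordinal 6 3 isT).
Definition r24 r := r ord0 (@Ordinal 6 4 isT).
Definition r34 r := r ord0 (@Ordinal 6 5 isT).

Definition inertia (m1 m2 m3 m4 : R) r : R :=
  (2 * (m1 + m2 + m3 + m4))^-1 *
  (m1 * m2 * r12 r ^+ 2 + m1 * m3 * r13 r ^+ 2 + m1 * m4 * r14 r ^+ 2
   + m2 * m3 * r23 r ^+ 2 + m2 * m4 * r24 r ^+ 2 + m3 * m4 * r34 r ^+ 2).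

Definition Ppoly r : R := r12 r * r34 r + r14 r * r23 r - r13 r * r24 r.

Definition Mplus (m1 m2 m3 m4 : R) : set 'rV[R]_6 :=
  [set r : 'rV[R]_6 | (forall j : 'I_6, 0 <= r ord0 j) /\ inertia m1 m2 m3 m4 r = 1 /\ Ppoly r = 0].
End Coords.

Definition contractible (R : realType) (T : topologicalType) (S : set T) : Prop :=
  exists x0 : T, S x0 /\
  exists H : R * T -> T,
    {within [set t : R | 0 <= t <= 1] `*` S, continuous H} /\
    (forall t x, 0 <= t <= 1 -> S x -> S (H (t, x))) /\
    (forall x, S x -> H (0, x) = x /\ H (1, x) = x0).

(* Main.v *)
Require Import Defs.
From HB Require Import structures.
From mathcomp Require Import all_boot all_order all_algebra.
From mathcomp Require Import all_classical all_reals all_analysis.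
From mathcomp Require Import lra ring.
Import Order.TTheory GRing.Theory Num.Theory.
Import numFieldNormedType.Exports.
Local Open Scope classical_set_scope.
Local Open Scope ring_scope.

Section S.
Variable R : realType.

Lemma coord_cont (j : 'I_6) : continuous (fun v : 'rV[R]_6 => v ord0 j).
Proof.
move=> u A /nbhs_ballP[e /= e0 eA].
apply/nbhs_ballP; exists e => //= v [_ uv]; apply: eA.
exact: uv.
Qed.

Lemma sum_cont (T : topologicalType) (I : Type) (s : seq I) (F : I -> T -> 'rV[R]_6) :
  (forall i, continuous (F i)) -> continuous (fun y => \sum_(i <- s) F i y).
Proof.
move=> hF; elim: s => [|i s IH].
  under eq_fun do rewrite big_nil. exact: cst_continuous.
under eq_fun do rewrite big_cons.
move=> y; apply: continuousD; [exact: hF | exact: IH].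
Qed.

Lemma row_cont (T : topologicalType) (f : 'I_6 -> T -> R) :
  (forall j, continuous (f j)) -> continuous (fun y => \row_j f j y).
Proof.
move=> hf.
have -> : (fun y => \row_j f j y) = (fun y => \sum_(j < 6) f j y *: (delta_mx ord0 j : 'rV[R]_6)).
  apply/funext => y; rewrite [LHS]row_sum_delta; apply: eq_bigr => j _; by rewrite mxE.
apply: sum_cont => j y; apply: continuousZ; [exact: hf | exact: cst_continuous].
Qed.

Lemma fst_cont : continuous (fun p : R * 'rV[R]_6 => p.1).
Proof. move=> p; exact: cvg_fst. Qed.
Lemma snd_coord_cont j : continuous (fun p : R * 'rV[R]_6 => p.2 ord0 j).
Proof. move=> p; apply: (continuous_comp _ (coord_cont j _)); exact: cvg_snd. Qed.

Section Gen.
Variable T : topologicalType.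
Implicit Types f g : T -> R.
Lemma cD f g : continuous f -> continuous g -> continuous (fun y => f y + g y).
Proof. by move=> hf hg x; apply: cvgD; [exact: hf | exact: hg]. Qed.
Lemma cB f g : continuous f -> continuous g -> continuous (fun y => f y - g y).
Proof. by move=> hf hg x; apply: cvgB; [exact: hf | exact: hg]. Qed.
Lemma cM f g : continuous f -> continuous g -> continuous (fun y => f y * g y).
Proof. by move=> hf hg x; apply: cvgM; [exact: hf | exact: hg]. Qed.
Lemma cN f : continuous f -> continuous (fun y => - f y).
Proof. by move=> hf x; apply: cvgN; exact: hf. Qed.
Lemma cX2 f : continuous f -> continuous (fun y => f y ^+ 2).
Proof. by move=> hf x; rewrite /=; under eq_fun do rewrite expr2; apply: cvgM; exact: hf. Qed.
Lemma cC (k : R) : continuous (fun _ : T => k).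
Proof. exact: cst_continuous. Qed.
Lemma cMax f g : continuous f -> continuous g -> continuous (fun y => Num.max (f y) (g y)).
Proof. move=> hf hg; exact: (max_fun_continuous hf hg). Qed.
End Gen.
Variables m1 m2 m3 m4 : R.

Definition sf (t : R) : R := Num.max 0 (1 - 2 * t).
Definition uf (t : R) : R := Num.max 0 (2 * t - 1).

Definition gf (p : R * 'rV[R]_6) (j : 'I_6) : R :=
  let t := p.1 in let v := p.2 in let s := sf t in let u := uf t in
  let a := r12 v + t * r24 v in
  let b := r13 v + t * (r34 v + r23 v) in
  let c := r14 v + t * r24 v in
  match val j with
  | 0 => a + u * (b + c)
  | 1 => (1 - u) * b
  | 2 => (1 - u) * c
  | 3 => s * r23 v
  | 4 => s * r24 v
  | _ => s * r34 v
  end.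

Definition G (p : R * 'rV[R]_6) : 'rV[R]_6 := \row_j gf p j.


Lemma c1 : continuous (fun p : R * 'rV[R]_6 => p.1). Proof. exact: fst_cont. Qed.
Lemma c12 : continuous (fun p : R * 'rV[R]_6 => r12 p.2). Proof. exact: snd_coord_cont. Qed.
Lemma c13 : continuous (fun p : R * 'rV[R]_6 => r13 p.2). Proof. exact: snd_coord_cont. Qed.
Lemma c14 : continuous (fun p : R * 'rV[R]_6 => r14 p.2). Proof. exact: snd_coord_cont. Qed.
Lemma c23 : continuous (fun p : R * 'rV[R]_6 => r23 p.2). Proof. exact: snd_coord_cont. Qed.
Lemma c24 : continuous (fun p : R * 'rV[R]_6 => r24 p.2). Proof. exact: snd_coord_cont. Qed.
Lemma c34 : continuous (fun p : R * 'rV[R]_6 => r34 p.2). Proof. exact: snd_coord_cont. Qed.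

Ltac cstep := match goal with
| |- continuous (fun y => @GRing.add _ (@?f y) (@GRing.opp _ (@?g y))) => apply (@cB _ f g)
| |- continuous (fun y => @GRing.add _ (@?f y) (@?g y)) => apply (@cD _ f g)
| |- continuous (fun y => @GRing.opp _ (@?f y)) => apply (@cN _ f)
| |- continuous (fun y => @GRing.mul _ (@?f y) (@?g y)) => apply (@cM _ f g)
| |- continuous (fun y => @Order.max _ _ (@?f y) (@?g y)) => apply (@cMax _ f g)
| |- continuous (fun y => y.1) => exact: c1
| |- continuous (fun y => r12 y.2) => exact: c12
| |- continuous (fun y => r13 y.2) => exact: c13
| |- continuous (fun y => r14 y.2) => exact: c14
| |- continuous (fun y => r23 y.2) => exact: c23
| |- continuous (fun y => r24 y.2) => exact: c24
| |- continuous (fun y => r34 y.2) => exact: c34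
| |- continuous (fun _ => ?k) => exact: (cC _ k)
end.

Lemma sf_cont : continuous (fun p : R * 'rV[R]_6 => sf p.1).
Proof. rewrite /sf; apply: cMax; repeat cstep. Qed.
Lemma uf_cont : continuous (fun p : R * 'rV[R]_6 => uf p.1).
Proof. rewrite /uf; apply: cMax; repeat cstep. Qed.

Lemma gf_cont j : continuous (fun p => gf p j).
Proof.
case: j => -[|[|[|[|[|[|k]]]]]] Hk; rewrite /gf /=; repeat (match goal with
| |- continuous (fun y => sf y.1) => exact: sf_cont
| |- continuous (fun y => uf y.1) => exact: uf_cont
| |- _ => cstep end).
Qed.

Lemma G_cont : continuous G.
Proof. apply: row_cont => j; exact: gf_cont. Qed.

Notation I := (inertia m1 m2 m3 m4).
Lemma eG j : continuous (fun p => G p ord0 j).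
Proof. move=> p; apply: (continuous_comp _ (coord_cont j _)); exact: G_cont. Qed.

Lemma IG_cont : continuous (fun p => I (G p)).
Proof.
rewrite /inertia; repeat (match goal with
| |- continuous (fun y => @GRing.exp _ (@?f y) 2) => apply (@cX2 _ f)
| |- continuous (fun y => r12 (G y)) => exact: eG
| |- continuous (fun y => r13 (G y)) => exact: eG
| |- continuous (fun y => r14 (G y)) => exact: eG
| |- continuous (fun y => r23 (G y)) => exact: eG
| |- continuous (fun y => r24 (G y)) => exact: eG
| |- continuous (fun y => r34 (G y)) => exact: eG
| |- _ => cstep end).
Qed.

Definition H (p : R * 'rV[R]_6) : 'rV[R]_6 := (Num.sqrt (I (G p)))^-1 *: G p.

Lemma H_cont p : 0 < I (G p) -> {for p, continuous H}.
Proof.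
move=> hp; apply: continuousZ; last exact: G_cont.
apply: continuousV; first by rewrite gt_eqF // sqrtr_gt0.
apply: continuous_comp; first exact: IG_cont.
exact: sqrt_continuous.
Qed.

Hypotheses (hm1 : 0 < m1) (hm2 : 0 < m2) (hm3 : 0 < m3) (hm4 : 0 < m4).

Lemma sf_facts t : 0 <= t <= 1 ->
  [/\ 0 <= sf t, 0 <= uf t, uf t <= 1, sf t * uf t = 0 & 1 <= 2 * (sf t + t)].
Proof.
move=> /andP[h0 h1]; rewrite /sf /uf; case: (lerP (2 * t) 1) => h.
  rewrite (@max_r _ _ 0 (1 - 2 * t)); last by lra.
  rewrite (@max_l _ _ 0 (2 * t - 1)); last by lra.
  split; lra.
rewrite (@max_l _ _ 0 (1 - 2 * t)); last by lra.
rewrite (@max_r _ _ 0 (2 * t - 1)); last by lra.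
split; lra.
Qed.

Lemma sf0 : sf 0 = 1. Proof. by rewrite /sf mulr0 subr0 max_r // ler01. Qed.
Lemma uf0 : uf 0 = 0. Proof. rewrite /uf mulr0 sub0r max_l //; lra. Qed.
Lemma sf1 : sf 1 = 0. Proof. rewrite /sf mulr1 max_l //; lra. Qed.
Lemma uf1 : uf 1 = 1. Proof. rewrite /uf mulr1 max_r //; lra. Qed.

Section Ent.
Variables (t : R) (v : 'rV[R]_6).
Let a := r12 v + t * r24 v.
Let b := r13 v + t * (r34 v + r23 v).
Let c := r14 v + t * r24 v.
Lemma G12 : r12 (G (t, v)) = a + uf t * (b + c). Proof. by rewrite /r12 mxE. Qed.
Lemma G13 : r13 (G (t, v)) = (1 - uf t) * b. Proof. by rewrite /r13 mxE. Qed.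
Lemma G14 : r14 (G (t, v)) = (1 - uf t) * c. Proof. by rewrite /r14 mxE. Qed.
Lemma G23 : r23 (G (t, v)) = sf t * r23 v. Proof. by rewrite /r23 mxE. Qed.
Lemma G24 : r24 (G (t, v)) = sf t * r24 v. Proof. by rewrite /r24 mxE. Qed.
Lemma G34 : r34 (G (t, v)) = sf t * r34 v. Proof. by rewrite /r34 mxE. Qed.
End Ent.

Lemma IZ k (w : 'rV[R]_6) : I (k *: w) = k ^+ 2 * I w.
Proof. rewrite /inertia /r12 /r13 /r14 /r23 /r24 /r34 !mxE; ring. Qed.
Lemma PZ k (w : 'rV[R]_6) : Ppoly (k *: w) = k ^+ 2 * Ppoly w.
Proof. rewrite /Ppoly /r12 /r13 /r14 /r23 /r24 /r34 !mxE; ring. Qed.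

Lemma Mpos : 0 < m1 + m2 + m3 + m4.
Proof. by rewrite !addr_gt0. Qed.

Lemma I_ge0 (w : 'rV[R]_6) : 0 <= I w.
Proof.
have t1 : 0 <= m1 * m2 * r12 w ^+ 2 by apply: mulr_ge0; [apply: mulr_ge0; exact: ltW | exact: sqr_ge0].
have t2 : 0 <= m1 * m3 * r13 w ^+ 2 by apply: mulr_ge0; [apply: mulr_ge0; exact: ltW | exact: sqr_ge0].
have t3 : 0 <= m1 * m4 * r14 w ^+ 2 by apply: mulr_ge0; [apply: mulr_ge0; exact: ltW | exact: sqr_ge0].
have t4 : 0 <= m2 * m3 * r23 w ^+ 2 by apply: mulr_ge0; [apply: mulr_ge0; exact: ltW | exact: sqr_ge0].
have t5 : 0 <= m2 * m4 * r24 w ^+ 2 by apply: mulr_ge0; [apply: mulr_ge0; exact: ltW | exact: sqr_ge0].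
have t6 : 0 <= m3 * m4 * r34 w ^+ 2 by apply: mulr_ge0; [apply: mulr_ge0; exact: ltW | exact: sqr_ge0].
rewrite /inertia; apply: mulr_ge0; last by lra.
by rewrite invr_ge0 mulr_ge0 // ltW // Mpos.
Qed.

Lemma sq0 (k x : R) : 0 < k -> k * x ^+ 2 = 0 -> x = 0.
Proof. move=> hk /eqP; rewrite mulf_eq0 gt_eqF //= expf_eq0 /= => /eqP //. Qed.

Lemma I_eq0 (w : 'rV[R]_6) : I w = 0 ->
  r12 w = 0 /\ r13 w = 0 /\ r14 w = 0 /\ r23 w = 0 /\ r24 w = 0 /\ r34 w = 0.
Proof.
rewrite /inertia => /eqP; rewrite mulf_eq0 invr_eq0 => /orP[|/eqP hS].
  by move=> /eqP h; have := Mpos; lra.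
have t1 : 0 <= m1 * m2 * r12 w ^+ 2 by apply: mulr_ge0; [apply: mulr_ge0; exact: ltW | exact: sqr_ge0].
have t2 : 0 <= m1 * m3 * r13 w ^+ 2 by apply: mulr_ge0; [apply: mulr_ge0; exact: ltW | exact: sqr_ge0].
have t3 : 0 <= m1 * m4 * r14 w ^+ 2 by apply: mulr_ge0; [apply: mulr_ge0; exact: ltW | exact: sqr_ge0].
have t4 : 0 <= m2 * m3 * r23 w ^+ 2 by apply: mulr_ge0; [apply: mulr_ge0; exact: ltW | exact: sqr_ge0].
have t5 : 0 <= m2 * m4 * r24 w ^+ 2 by apply: mulr_ge0; [apply: mulr_ge0; exact: ltW | exact: sqr_ge0].
have t6 : 0 <= m3 * m4 * r34 w ^+ 2 by apply: mulr_ge0; [apply: mulr_ge0; exact: ltW | exact: sqr_ge0].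
do !split; [apply: (@sq0 (m1 * m2)) | apply: (@sq0 (m1 * m3)) | apply: (@sq0 (m1 * m4)) | apply: (@sq0 (m2 * m3)) | apply: (@sq0 (m2 * m4)) | apply: (@sq0 (m3 * m4))]; rewrite ?mulr_gt0 //; lra.
Qed.

Notation S := (Mplus m1 m2 m3 m4).

Lemma G_ge0 (t : R) (v : 'rV[R]_6) : 0 <= t <= 1 -> (forall j, 0 <= v ord0 j) -> forall j, 0 <= G (t, v) ord0 j.
Proof.
move=> ht hv j; have [s0 u0 u1 su st] := @sf_facts t ht; case/andP: ht => t0 t1.
have h12 : 0 <= r12 v := hv _. have h13 : 0 <= r13 v := hv _.
have h14 : 0 <= r14 v := hv _. have h23 : 0 <= r23 v := hv _.
have h24 : 0 <= r24 v := hv _. have h34 : 0 <= r34 v := hv _.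
rewrite mxE; case: j => -[|[|[|[|[|[|k]]]]]] Hk /=;
  repeat first [lra | exact: t0 | apply: mulr_ge0 | apply: addr_ge0].
Qed.

Lemma PG t (v : 'rV[R]_6) : 0 <= t <= 1 -> Ppoly v = 0 -> Ppoly (G (t, v)) = 0.
Proof.
move=> ht hP; have [_ _ _ su _] := @sf_facts t ht.
rewrite {1}/Ppoly G12 G13 G14 G23 G24 G34.
apply: (@eq_trans _ _ (sf t * Ppoly v + sf t * uf t *
   (((r13 v + t * (r34 v + r23 v)) + (r14 v + t * r24 v)) * r34 v
    - (r14 v + t * r24 v) * r23 v + (r13 v + t * (r34 v + r23 v)) * r24 v))).
  rewrite /Ppoly; ring.
rewrite su hP; ring.
Qed.

Lemma IG_pos (t : R) (v : 'rV[R]_6) : 0 <= t <= 1 -> S v -> 0 < I (G (t, v)).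
Proof.
move=> ht [hv [hI hP]]; have [s0 u0 u1 su st] := @sf_facts t ht; case/andP: (ht) => t0 t1.
have h12 : 0 <= r12 v := hv _. have h13 : 0 <= r13 v := hv _.
have h14 : 0 <= r14 v := hv _. have h23 : 0 <= r23 v := hv _.
have h24 : 0 <= r24 v := hv _. have h34 : 0 <= r34 v := hv _.
have := I_ge0 (G (t, v)); rewrite le_eqVlt => /orP[/eqP h|//]; exfalso.
have [z1 [z2 [z3 [z4 [z5 z6]]]]] := @I_eq0 _ (esym h).
have e : (r12 v + t * r24 v) + (r13 v + t * (r34 v + r23 v)) + (r14 v + t * r24 v)
   = r12 (G (t, v)) + r13 (G (t, v)) + r14 (G (t, v)).
  rewrite G12 G13 G14; ring.
rewrite z1 z2 z3 !addr0 in e.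
rewrite G23 in z4; rewrite G24 in z5; rewrite G34 in z6.
have p4 : 0 <= t * r23 v by apply: mulr_ge0.
have p5 : 0 <= t * r24 v by apply: mulr_ge0.
have p6 : 0 <= t * r34 v by apply: mulr_ge0.
have st' : 0 <= 2 * (sf t + t) - 1 by lra.
have q4 := mulr_ge0 h23 st'.
have q5 := mulr_ge0 h24 st'.
have q6 := mulr_ge0 h34 st'.
have x1 : r12 v = 0 by lra.
have x2 : r13 v = 0 by lra.
have x3 : r14 v = 0 by lra.
have x4 : r23 v = 0 by lra.
have x5 : r24 v = 0 by lra.
have x6 : r34 v = 0 by lra.
have : I v = 0 by rewrite /inertia x1 x2 x3 x4 x5 x6; ring.
by rewrite hI => /eqP; rewrite oner_eq0.
Qed.

Lemma G0 (v : 'rV[R]_6) : G (0, v) = v.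
Proof.
apply/rowP => j; rewrite mxE; case: j => -[|[|[|[|[|[|k]]]]]] Hk /=; rewrite ?sf0 ?uf0.
all: try by [].
all: rewrite /gf /= ?sf0 ?uf0 /r12 /r13 /r14 /r23 /r24 /r34; rewrite ?mul0r ?addr0 ?subr0 ?mul1r; congr (v _ _); by apply: val_inj.
Qed.

Definition e0 : 'rV[R]_6 := \row_j (if val j == 0%N then 1 else 0).
Definition sig (v : 'rV[R]_6) := r12 v + r13 v + r14 v + r23 v + 2 * r24 v + r34 v.

Lemma G1 (v : 'rV[R]_6) : G (1, v) = sig v *: e0.
Proof.
apply/rowP => j; rewrite !mxE; case: j => -[|[|[|[|[|[|k]]]]]] Hk /=; rewrite /gf /= ?sf1 ?uf1 /sig; ring.
Qed.

Lemma normalize_in (w : 'rV[R]_6) : (forall j, 0 <= w ord0 j) -> Ppoly w = 0 -> 0 < I w ->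
  S ((Num.sqrt (I w))^-1 *: w).
Proof.
move=> hw hP hI; split.
  by move=> j; rewrite mxE; apply: mulr_ge0 => //; rewrite invr_ge0 sqrtr_ge0.
split; first by rewrite IZ exprVn sqr_sqrtr ?ltW // mulVf // gt_eqF.
by rewrite PZ hP mulr0.
Qed.

Lemma e0_ge0 j : 0 <= e0 ord0 j.
Proof. by rewrite mxE; case: ifP => _ //; rewrite ler01. Qed.
Lemma e0_P : Ppoly e0 = 0.
Proof. rewrite /Ppoly /r12 /r13 /r14 /r23 /r24 /r34 !mxE /=; ring. Qed.
Lemma e0_I : 0 < I e0.
Proof.
have -> : I e0 = (2 * (m1 + m2 + m3 + m4))^-1 * (m1 * m2).
  rewrite /inertia /r12 /r13 /r14 /r23 /r24 /r34 !mxE /=; ring.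
by rewrite mulr_gt0 // ?invr_gt0 ?mulr_gt0 // Mpos.
Qed.

Lemma main : contractible R S.
Proof.
exists ((Num.sqrt (I e0))^-1 *: e0); split.
  exact: normalize_in e0_ge0 e0_P e0_I.
exists H; split.
  apply: continuous_in_subspaceT => -[t x]; rewrite inE => -[/= ht hx].
  by apply: H_cont; apply: IG_pos.
split.
  move=> t x ht hx; rewrite /H; apply: normalize_in.
  - by apply: G_ge0 => //; case: hx.
  - by apply: PG => //; case: hx => _ [].
  - exact: IG_pos.
move=> x hx; split.
  by rewrite /H G0; case: hx => _ [-> _]; rewrite sqrtr1 invr1 scale1r.
have h01 : 0 <= (1 : R) <= 1 by rewrite ler01 lexx.
have hpos := @IG_pos 1 x h01 hx.
rewrite /H G1 IZ in hpos |- *.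
have [hv _] := hx.
have sg0 : 0 <= sig x.
  have h12 : 0 <= r12 x := hv _. have h13 : 0 <= r13 x := hv _.
  have h14 : 0 <= r14 x := hv _. have h23 : 0 <= r23 x := hv _.
  have h24 : 0 <= r24 x := hv _. have h34 : 0 <= r34 x := hv _.
  rewrite /sig; lra.
have sn0 : sig x != 0.
  by apply/eqP => h0; move: hpos; rewrite h0 expr0n /= mul0r ltxx.
rewrite sqrtrM ?sqr_ge0 // sqrtr_sqr ger0_norm // scalerA.
by rewrite invfM mulrAC mulVf // mul1r.
Qed.
End S.

Theorem lemma5 (R : realType) (m1 m2 m3 m4 : R)
  (hm1 : 0 < m1) (hm2 : 0 < m2) (hm3 : 0 < m3) (hm4 : 0 < m4) :
  contractible R (Mplus m1 m2 m3 m4).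
Proof. exact: main. Qed.
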